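(* Let $p,q \geq 1$ with $p+q \geq 3$, and let $M_x, M_y, M_z$ be three Minkowski patches in $\mathrm{Ein}^{p,q}$. If $M_x \cap M_z = M_y \cap M_z$, then $M_x = M_y$.
   Context: Let $\mathbb{R}^{p+1,q+1}$ be $\mathbb{R}^{p+q+2}$ with a nondegenerate symmetric bilinear form $B$ of signature $(p+1,q+1)$, and $\mathrm{Ein}^{p,q} \subset \mathbb{R}P^{p+q+1}$ the set of isotropic lines, with the conformal structure induced by $B$. For an isotropic vector $v$ with $x=[v]$, the Minkowski patch with vertex $x$ is $M_x = \{[w] \in \mathrm{Ein}^{p,q} : B(v,w) \neq 0\}$; it is an open dense subset conformally equivalent to $\mathbb{R}^{p,q}$. *)

(* Defs.v *)
From HB Require Import structures.
From mathcomp Require Import all_boot all_order all_algebra.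
Set Implicit Arguments. Unset Strict Implicit. Unset Printing Implicit Defensive.
Import Order.TTheory GRing.Theory Num.Theory.
Local Open Scope ring_scope.

Definition Jpq (R : realFieldType) (p q : nat) : 'M[R]_(p.+1 + q.+1) :=
  diag_mx (row_mx (const_mx 1) (const_mx (-1))).

(* S is the Gram matrix of a nondegenerate symmetric bilinear form of
   signature (p+1,q+1): it is congruent to Jpq. *)
Definition sig_form (R : realFieldType) (p q : nat) (S : 'M[R]_(p.+1 + q.+1)) : Prop :=
  exists P : 'M[R]_(p.+1 + q.+1), P \in unitmx /\ S = P^T *m Jpq R p q *m P.

Definition bform (R : realFieldType) (n : nat) (S : 'M[R]_n) (v w : 'rV[R]_n) : R :=
  (v *m S *m w^T) 0 0.

(* v is a nonzero isotropic vector, i.e. [v] is a point of Ein^{p,q}. *)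
Definition isotropic (R : realFieldType) (n : nat) (S : 'M[R]_n) (v : 'rV[R]_n) : Prop :=
  v != 0 /\ bform S v v = 0.

(* [w] lies in the Minkowski patch M_[v] (w a representative of a point of Ein). *)
Definition in_patch (R : realFieldType) (n : nat) (S : 'M[R]_n) (v w : 'rV[R]_n) : Prop :=
  isotropic S w /\ bform S v w != 0.

(* Main.v *)
Require Import Defs.
From HB Require Import structures.
From mathcomp Require Import all_boot all_order all_algebra.
From mathcomp Require Import ring zify.
From Stdlib Require Import Classical.
Import Order.TTheory GRing.Theory Num.Theory.
Local Open Scope ring_scope.
Lemma bformDl (R : realFieldType) n (S : 'M[R]_n) u v w :
  bform S (u + v) w = bform S u w + bform S v w.
Proof. by rewrite /bform !mulmxDl mxE. Qed.
Lemma bformDr (R : realFieldType) n (S : 'M[R]_n) u v w :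
  bform S w (u + v) = bform S w u + bform S w v.
Proof. by rewrite /bform linearD /= mulmxDr mxE. Qed.
Lemma bformZl (R : realFieldType) n (S : 'M[R]_n) (k : R) u w :
  bform S (k *: u) w = k * bform S u w.
Proof. by rewrite /bform -!scalemxAl mxE. Qed.
Lemma bformZr (R : realFieldType) n (S : 'M[R]_n) (k : R) u w :
  bform S w (k *: u) = k * bform S w u.
Proof. by rewrite /bform linearZ /= -scalemxAr mxE. Qed.
Lemma bformNl (R : realFieldType) n (S : 'M[R]_n) u w :
  bform S (- u) w = - bform S u w.
Proof. by rewrite /bform !mulNmx mxE. Qed.
Lemma bformNr (R : realFieldType) n (S : 'M[R]_n) u w :
  bform S w (- u) = - bform S w u.
Proof. by rewrite /bform linearN /= mulmxN mxE. Qed.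
Lemma bform0r (R : realFieldType) n (S : 'M[R]_n) w :
  bform S w 0 = 0.
Proof. by rewrite /bform linear0 mulmx0 mxE. Qed.
Lemma bformC (R : realFieldType) n (S : 'M[R]_n) (hS : S^T = S) u v :
  bform S u v = bform S v u.
Proof.
rewrite /bform -[in LHS](trmxK (u *m S *m v^T)) [in LHS]mxE.
by rewrite !trmx_mul trmxK hS mulmxA.
Qed.
Arguments bformC {R n S} hS u v.
Lemma la1 (R : realFieldType) n (S : 'M[R]_n) (hS : S^T = S) (hU : S \in unitmx)
  (a c : 'rV[R]_n) :
  (forall v, bform S a v = 0 -> bform S c v = 0) -> exists l, c = l *: a.
Proof.
move=> H.
set F := S *m a^T. set G := S *m c^T.
have eF v : bform S a v = (v *m F) 0 0 by rewrite bformC // /bform /F mulmxA.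
have eG v : bform S c v = (v *m G) 0 0 by rewrite bformC // /bform /G mulmxA.
have eFd : F = S *m a^T by [].
have eGd : G = S *m c^T by [].
clearbody F G.
have eE (M : 'cV[R]_n) k : (delta_mx (0:'I_1) k *m M) 0 0 = M k 0 by rewrite -rowE mxE.
have key : exists l, G = l *: F.
  case: (boolP [exists k, F k 0 != 0]) => [/existsP [k Hk] | Hn].
    exists (G k 0 / F k 0).
    apply/matrixP => i j; rewrite (ord1 j) [RHS]mxE.
    set v := (delta_mx (0:'I_1) i) - ((((delta_mx (0:'I_1) i) : 'rV[R]_n) *m F) 0 0 / F k 0) *: (delta_mx (0:'I_1) k).
    have hv : (v *m F) 0 0 = 0.
      rewrite /v mulmxDl mulNmx -scalemxAl -!rowE !mxE. by field.
    have := H v; rewrite eF eG => /(_ hv).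
    rewrite /v mulmxDl mulNmx -scalemxAl -!rowE !mxE => h.
    apply/eqP; rewrite -subr_eq0; apply/eqP; rewrite -h; field.
    by [].
  exists 0; rewrite scale0r; apply/matrixP => i j; rewrite (ord1 j) mxE.
  have hF : F = 0.
    apply/matrixP => i' j'; rewrite (ord1 j') mxE.
    by move: Hn; rewrite negb_exists => /forallP /(_ i') /negPn /eqP.
  by have := H (delta_mx (0:'I_1) i); rewrite eF eG hF mulmx0 mxE eE => ->.
case: key => l hl; exists l.
have : c^T = l *: a^T.
  by rewrite -(mulKmx hU c^T) -eGd hl eFd -scalemxAr mulKmx.
by move=> /(congr1 trmx); rewrite trmxK linearZ /= trmxK.
Qed.
Lemma la2 (R : realFieldType) n (S : 'M[R]_n) (hS : S^T = S) (hn : (4 < n)%N)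
  (a b c : 'rV[R]_n) :
  exists u, [/\ bform S a u = 0, bform S b u = 0, bform S c u = 0
    & ~ exists l, u = l *: a].
Proof.
have eF (x v : 'rV[R]_n) : bform S x v = (v *m (S *m x^T)) 0 0
  by rewrite bformC // /bform mulmxA.
set M := row_mx (S *m a^T) (row_mx (S *m b^T) (S *m c^T)).
set K := kermx M.
have rK : (1 < \rank K)%N.
  rewrite /K mxrank_ker.
  have := rank_leq_col M. lia.
have [i Hi] : exists i, ~~ (row i K <= a)%MS.
  apply/existsP; apply: contraLR rK; rewrite negb_exists => /forallP H.
  rewrite -leqNgt.
  have : (K <= a)%MS by apply/row_subP => i; have := H i; rewrite negbK.
  move=> /mxrankS; have := rank_leq_row a; lia.
exists (row i K).
have hM : row i K *m M = 0 by rewrite -row_mul mulmx_ker row0.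
move: hM; rewrite /M !mul_mx_row => /eqP; rewrite !row_mx_eq0 => /andP [/eqP ha /andP [/eqP hb /eqP hc]].
split; rewrite ?eF ?ha ?hb ?hc ?mxE //.
case => l hl; move: Hi; rewrite hl scalemx_sub //.
Qed.
Ltac bexp := rewrite ?(bformDl, bformDr, bformNl, bformNr, bformZl, bformZr).

Lemma case1 (R : realFieldType) n (S : 'M[R]_n) (hS : S^T = S) (hU : S \in unitmx)
  (a b c : 'rV[R]_n) (ha : isotropic S a) (hb : isotropic S b)
  (H : forall w, isotropic S w -> bform S a w = 0 -> bform S c w != 0 -> bform S b w = 0)
  (hca : bform S c a != 0) : exists l, b = l *: a.
Proof.
case: ha => ha0 haa; case: hb => hb0 hbb.
have hba : bform S b a = 0 by apply: H => //; split.
have hw : forall w, isotropic S w -> bform S a w = 0 -> bform S b w = 0.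
  move=> w [hw0 hww] haw.
  case: (boolP (bform S c w == 0)) => [/eqP hcw | hcw]; last exact: H.
  have hcwa : bform S c (w + a) != 0 by rewrite bformDr hcw add0r.
  have : bform S b (w + a) = 0.
    apply: H => //; last by rewrite bformDr haw haa addr0.
    split; first by apply: contraNneq hcwa => ->; rewrite bform0r.
    bexp; rewrite hww haa (bformC hS w a) haw; ring.
  by rewrite bformDr hba addr0.
apply: (@la1 _ _ S hS hU) => v hav; apply/eqP; apply/negP => /negP hbv.
set phi := (2 * bform S b v) *: v - bform S v v *: b.
have hbphi : bform S b phi = 2 * bform S b v ^+ 2.
  rewrite /phi; bexp; rewrite hbb; ring.
have hphi : bform S b phi != 0 by rewrite hbphi mulf_neq0 // ?pnatr_eq0 // expf_neq0.
suff : bform S b phi = 0 by move/eqP; rewrite (negbTE hphi).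
apply: hw.
  split; first by apply: contraNneq hphi => ->; rewrite bform0r.
  rewrite /phi; bexp; rewrite hbb (bformC hS v b); ring.
rewrite /phi; bexp; rewrite hav (bformC hS a b) hba; ring.
Qed.

Lemma case2 (R : realFieldType) n (S : 'M[R]_n) (hS : S^T = S) (hU : S \in unitmx)
  (hn : (4 < n)%N)
  (a b c : 'rV[R]_n) (ha : isotropic S a) (hb : isotropic S b) (hc : isotropic S c)
  (H : forall w, isotropic S w -> bform S a w = 0 -> bform S c w != 0 -> bform S b w = 0)
  (hca : bform S c a = 0) (hnp : ~ exists l, c = l *: a) : exists l, b = l *: a.
Proof.
case: ha => ha0 haa; case: hb => hb0 hbb; case: hc => hc0 hcc.
have [d [had hcd]] : exists d, bform S a d = 0 /\ bform S c d != 0.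
  apply: NNPP => hnd; apply: hnp; apply: (@la1 _ _ S hS hU) => v hav.
  apply/eqP; apply/negP => hcv; apply: hnd; exists v; split => //; exact/negP.
have hac : bform S a c = 0 by rewrite (bformC hS).
pose Q v := 2 * bform S c v * bform S b v - bform S v v * bform S b c.
have hQ1 : forall v, bform S a v = 0 -> bform S c v != 0 -> Q v = 0.
  move=> v hav hcv.
  set phi := (2 * bform S c v) *: v - bform S v v *: c.
  have hcphi : bform S c phi = 2 * bform S c v ^+ 2.
    rewrite /phi; bexp; rewrite hcc; ring.
  have hphi : bform S c phi != 0 by rewrite hcphi mulf_neq0 // ?pnatr_eq0 // expf_neq0.
  have : bform S b phi = 0.
    apply: H => //.
      split; first by apply: contraNneq hphi => ->; rewrite bform0r.
      rewrite /phi; bexp; rewrite hcc (bformC hS v c); ring.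
    rewrite /phi; bexp; rewrite hav hac; ring.
  rewrite /phi /Q; bexp => <-; ring.
have hQ : forall v, bform S a v = 0 -> Q v = 0.
  move=> v hav.
  case: (boolP (bform S c v == 0)) => [/eqP hcv | hcv]; last exact: hQ1.
  have h1 : Q (v + d) = 0 by apply: hQ1; bexp; rewrite ?hav ?had ?hcv ?add0r ?addr0.
  have h2 : Q (v - d) = 0.
    by apply: hQ1; bexp; rewrite ?hav ?had ?hcv ?add0r ?addr0 ?oppr0 // oppr_eq0.
  have h3 : Q d = 0 by apply: hQ1.
  have id : Q (v+d) + Q (v-d) = 2 * Q v + 2 * Q d.
    by rewrite /Q; bexp; rewrite (bformC hS d v); ring.
  move: id; rewrite h1 h2 h3 addr0 mulr0 addr0 => /eqP.
  by rewrite eq_sym mulf_eq0 pnatr_eq0 /= => /eqP.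
have hbeta : forall u v, bform S a u = 0 -> bform S a v = 0 ->
    bform S c u * bform S b v + bform S c v * bform S b u - bform S u v * bform S b c = 0.
  move=> u v hau hav.
  have id : Q (u + v) - Q u - Q v = 2 * (bform S c u * bform S b v
     + bform S c v * bform S b u - bform S u v * bform S b c).
    by rewrite /Q; bexp; rewrite (bformC hS v u); ring.
  move: id; rewrite !hQ //; last by bexp; rewrite hau hav addr0.
  rewrite !subr0 => /eqP; rewrite eq_sym mulf_eq0 pnatr_eq0 /= => /eqP.
  done.
case: (boolP (bform S b c == 0)) => [/eqP hbc | hbc].
  have hbd : bform S b d = 0.
    have := hbeta d d had had; rewrite hbc mulr0 subr0 => /eqP.
    rewrite -mulr2n -mulr_natr mulf_eq0 pnatr_eq0 orbF mulf_eq0 (negbTE hcd) /=.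
    by move/eqP.
  apply: (@la1 _ _ S hS hU) => v hav.
  have := hbeta d v had hav; rewrite hbc hbd !mulr0 subr0 addr0 => /eqP.
  by rewrite mulf_eq0 (negbTE hcd) /= => /eqP.
exfalso.
have [u [hau hbu hcu hnu]] := @la2 _ _ S hS hn a b c.
apply: hnu; apply: (@la1 _ _ S hS hU) => v hav.
have := hbeta u v hau hav; rewrite hbu hcu !mul0r mulr0 add0r => /eqP.
  by rewrite subr_eq0 eq_sym mulf_eq0 (negbTE hbc) orbF => /eqP.
Qed.
Lemma sig_sym_unit (R : realFieldType) (p q : nat) (S : 'M[R]_(p.+1 + q.+1)) :
  sig_form S -> S^T = S /\ S \in unitmx.
Proof.
case=> P [hP ->]; split.
  by rewrite !trmx_mul trmxK /Jpq tr_diag_mx mulmxA.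
rewrite !unitmx_mul unitmx_tr hP andbT /=.
rewrite unitmxE det_diag unitfE; apply/prodf_neq0 => i _.
rewrite mxE; case: splitP => j _; rewrite mxE //.
  by rewrite oner_eq0.
by rewrite oppr_eq0 oner_eq0.
Qed.

Lemma mainlem (R : realFieldType) n (S : 'M[R]_n) (hS : S^T = S) (hU : S \in unitmx)
  (hn : (4 < n)%N)
  (a b c : 'rV[R]_n) (ha : isotropic S a) (hb : isotropic S b) (hc : isotropic S c)
  (H : forall w, isotropic S w -> bform S a w = 0 -> bform S c w != 0 -> bform S b w = 0)
  (hnp : ~ exists l, c = l *: a) : exists l, b = l *: a.
Proof.
case: (boolP (bform S c a == 0)) => [/eqP h | h].
  exact: (@case2 _ _ S hS hU hn a b c ha hb hc H h hnp).
exact: (@case1 _ _ S hS hU a b c ha hb H h).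
Qed.
Theorem lemma2p3 (R : realFieldType) (p q : nat)
  (hp : (1 <= p)%N) (hq : (1 <= q)%N) (hpq : (3 <= p + q)%N)
  (S : 'M[R]_(p.+1 + q.+1)) (hS : sig_form S)
  (x y z : 'rV[R]_(p.+1 + q.+1))
  (hx : isotropic S x) (hy : isotropic S y) (hz : isotropic S z) :
  (forall w, (in_patch S x w /\ in_patch S z w) <-> (in_patch S y w /\ in_patch S z w)) ->
  forall w, in_patch S x w <-> in_patch S y w.
Proof.
move=> Hiff.
have [hsym hU] := @sig_sym_unit _ _ _ S hS.
have hn : (4 < p.+1 + q.+1)%N by lia.
have H1 : forall w, isotropic S w -> bform S x w = 0 -> bform S z w != 0 -> bform S y w = 0.
  move=> w hw hxw hzw; case: (boolP (bform S y w == 0)) => [/eqP // | hyw]; exfalso.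
  have [[_ hx'] _] := proj2 (Hiff w) (conj (conj hw hyw) (conj hw hzw)).
  by move: hx'; rewrite hxw eqxx.
have H2 : forall w, isotropic S w -> bform S y w = 0 -> bform S z w != 0 -> bform S x w = 0.
  move=> w hw hyw hzw; case: (boolP (bform S x w == 0)) => [/eqP // | hxw]; exfalso.
  have [[_ hy'] _] := proj1 (Hiff w) (conj (conj hw hxw) (conj hw hzw)).
  by move: hy'; rewrite hyw eqxx.
have fin : forall a b : 'rV[R]_(p.+1 + q.+1), isotropic S b ->
    (exists l, b = l *: a) -> forall w, in_patch S a w <-> in_patch S b w.
  move=> a b [hb0 _] [l hl] w; subst b.
  have hl0 : l != 0 by apply: contraNneq hb0 => ->; rewrite scale0r.
  rewrite /in_patch bformZl mulf_eq0 negb_or hl0 /=; tauto.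
case: (classic (exists l, z = l *: x)) => hzx.
  case: (classic (exists l, z = l *: y)) => hzy.
    case: hzx => l1 e1; case: hzy => l2 e2.
    have hl2 : l2 != 0 by case: hz => hz0 _; apply: contraNneq hz0 => h; rewrite e2 h scale0r.
    apply: fin => //; exists (l2^-1 * l1).
    by rewrite -scalerA -e1 e2 scalerA mulVf // scale1r.
  have [l hl] := @mainlem _ _ S hsym hU hn y x z hy hx hz H2 hzy.
  move=> w; symmetry; apply: fin => //; by exists l.
apply: fin => //; exact: (@mainlem _ _ S hsym hU hn x y z hx hy hz H1 hzx).
Qed.
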